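(* For every integer $q\ge2$, $\gamma^{DLD}(K_q^3)=q^2$.
   Context: $K_q^3=K_q\square K_q\square K_q$ is the graph with vertex set $\{1,\dots,q\}^3$ in which two vertices are adjacent iff they differ in exactly one coordinate. For a code (nonempty vertex subset) $C$ and vertex $v$, $I(C;v)=N[v]\cap C$, where $N[v]$ is the closed neighbourhood. A code $C$ is solid-locating-dominating if for all distinct non-codewords $u,v$, $I(C;u)\setminus I(C;v)\ne\emptyset$. $\gamma^{DLD}(G)$ is the minimum size of a solid-locating-dominating code in the finite graph $G$. *)

(* Defs.v *)
From mathcomp Require Import all_boot.
Set Implicit Arguments. Unset Strict Implicit. Unset Printing Implicit Defensive.

Definition vert (q : nat) : finType := ('I_q * 'I_q * 'I_q)%type.

Definition adj (q : nat) (u v : vert q) : bool :=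
  let: (a1, a2, a3) := u in let: (b1, b2, b3) := v in
  ((a1 != b1) + (a2 != b2) + (a3 != b3) == 1)%N.

Definition Nclosed (q : nat) (v : vert q) : {set vert q} :=
  [set u | (u == v) || adj u v].

Definition Iset (q : nat) (C : {set vert q}) (v : vert q) : {set vert q} :=
  Nclosed v :&: C.

Definition solid_LD (q : nat) (C : {set vert q}) : Prop :=
  C != set0 /\
  forall u v : vert q, u \notin C -> v \notin C -> u != v ->
    Iset C u :\: Iset C v != set0.

Definition gamma_DLD_is (q k : nat) : Prop :=
  (exists C : {set vert q}, solid_LD C /\ #|C| = k) /\
  (forall C : {set vert q}, solid_LD C -> k <= #|C|).

(* Main.v *)
Require Import Defs.
From mathcomp Require Import all_boot zify.
Set Implicit Arguments. Unset Strict Implicit. Unset Printing Implicit Defensive.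

Lemma adj_cases q (za zb zc a b c : 'I_q) : adj (za,zb,zc) (a,b,c) ->
  [\/ [/\ za != a, zb = b & zc = c], [/\ za = a, zb != b & zc = c] | [/\ za = a, zb = b & zc != c]].
Proof.
rewrite /adj.
case: (eqVneq za a) => [->|h1]; case: (eqVneq zb b) => [->|h2];
  case: (eqVneq zc c) => [->|h3]; rewrite ?eqxx ?h1 ?h2 ?h3 //=; by [constructor|].
Qed.

Lemma adj1 q (x y b c : 'I_q) : x != y -> adj (x,b,c) (y,b,c).
Proof. by move=> h; rewrite /adj h !eqxx. Qed.
Lemma adj2 q (a x y c : 'I_q) : x != y -> adj (a,x,c) (a,y,c).
Proof. by move=> h; rewrite /adj h !eqxx. Qed.
Lemma adj3 q (a b x y : 'I_q) : x != y -> adj (a,b,x) (a,b,y).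
Proof. by move=> h; rewrite /adj h !eqxx. Qed.

Lemma adj_sym q (u v : vert q) : adj u v = adj v u.
Proof. by case: u => [[a b] c]; case: v => [[x y] z]; rewrite /adj ![_ == a]eq_sym ![_ == b]eq_sym ![_ == c]eq_sym. Qed.

Definition chi q (C : {set vert q}) (a b c : 'I_q) : nat := ((a,b,c) \in C).
Definition n3 q (C : {set vert q}) a b := \sum_(c : 'I_q) chi C a b c.
Definition r1 q (C : {set vert q}) b c := \sum_(a : 'I_q) chi C a b c.
Definition r2 q (C : {set vert q}) a c := \sum_(b : 'I_q) chi C a b c.

Lemma sum0_eq (I : finType) (F : I -> nat) i : \sum_j F j = 0 -> F i = 0.
Proof. by move/eqP; rewrite sum_nat_eq0 => /forallP/(_ i)/eqP. Qed.

Lemma chi_in q (C : {set vert q}) a b c : (a,b,c) \in C -> chi C a b c = 1.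
Proof. by rewrite /chi => ->. Qed.

Lemma IsetP q (C : {set vert q}) u v : u \notin C -> v \notin C -> u != v -> solid_LD C ->
  exists z, [/\ z \in C, adj z u & ~~ ((z == v) || adj z v)].
Proof.
move=> hu hv huv [_ sol]; case/set0Pn: (sol _ _ hu hv huv) => z.
rewrite !inE => /andP [hnv /andP [hzu hzC]].
exists z; split => //.
  case/orP: hzu => // /eqP ez; by move: hzC; rewrite ez (negbTE hu).
by move: hnv; rewrite hzC andbT.
Qed.

Lemma L3 q (C : {set vert q}) a b c c' : solid_LD C -> (a,b,c) \notin C ->
  r1 C b c = 0 -> r2 C a c = 0 -> c' != c -> (a,b,c') \in C.
Proof.
move=> sol hu h1 h2 hc'; apply/negPn/negP => hv.
have huv : (a,b,c) != (a,b,c') by apply/eqP => -[e]; rewrite e eqxx in hc'.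
case: (IsetP hu hv huv sol) => [[[za zb] zc]] [hz hadj hn].
case: (adj_cases hadj) => [[_ e1 e2]|[e1 _ e2]|[e1 e2 hzc]]; subst.
- by move: (sum0_eq za h1); rewrite chi_in.
- by move: (sum0_eq zb h2); rewrite chi_in.
- case/negP: hn; case: (eqVneq zc c') => [->|h]; first by rewrite eqxx.
  by rewrite adj3 // orbT.
Qed.

Lemma L1 q (C : {set vert q}) a b c a' : solid_LD C -> (a,b,c) \notin C ->
  r2 C a c = 0 -> n3 C a b = 0 -> a' != a -> (a',b,c) \in C.
Proof.
move=> sol hu h1 h2 ha'; apply/negPn/negP => hv.
have huv : (a,b,c) != (a',b,c) by apply/eqP => -[e]; rewrite e eqxx in ha'.
case: (IsetP hu hv huv sol) => [[[za zb] zc]] [hz hadj hn].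
case: (adj_cases hadj) => [[hza e1 e2]|[e1 _ e2]|[e1 e2 hzc]]; subst.
- case/negP: hn; case: (eqVneq za a') => [->|h]; first by rewrite eqxx.
  by rewrite adj1 // orbT.
- by move: (sum0_eq zb h1); rewrite chi_in.
- by move: (sum0_eq zc h2); rewrite chi_in.
Qed.

Lemma L2 q (C : {set vert q}) a b c b' : solid_LD C -> (a,b,c) \notin C ->
  r1 C b c = 0 -> n3 C a b = 0 -> b' != b -> (a,b',c) \in C.
Proof.
move=> sol hu h1 h2 hb'; apply/negPn/negP => hv.
have huv : (a,b,c) != (a,b',c) by apply/eqP => -[e]; rewrite e eqxx in hb'.
case: (IsetP hu hv huv sol) => [[[za zb] zc]] [hz hadj hn].
case: (adj_cases hadj) => [[_ e1 e2]|[e1 hzb e2]|[e1 e2 hzc]]; subst.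
- by move: (sum0_eq za h1); rewrite chi_in.
- case/negP: hn; case: (eqVneq zb b') => [->|h]; first by rewrite eqxx.
  by rewrite adj2 // orbT.
- by move: (sum0_eq zc h2); rewrite chi_in.
Qed.

Lemma sum_ge_pred n (F : 'I_n -> nat) i : (forall j, j != i -> 0 < F j) -> n.-1 <= \sum_j F j.
Proof.
move=> h; rewrite (bigD1 i) //=.
apply: leq_trans (leq_addl _ _).
have -> : n.-1 = \sum_(j | j != i) 1.
  by rewrite sum_nat_const cardC1 card_ord muln1.
by apply: leq_sum => j /h.
Qed.

Lemma N3big q (C : {set vert q}) a b c : solid_LD C -> (a,b,c) \notin C ->
  r1 C b c = 0 -> r2 C a c = 0 -> q.-1 <= n3 C a b.
Proof. move=> sol hu h1 h2; apply: (sum_ge_pred (i:=c)) => j hj. by rewrite chi_in // (L3 sol hu h1 h2 hj). Qed.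
Lemma R1big q (C : {set vert q}) a b c : solid_LD C -> (a,b,c) \notin C ->
  r2 C a c = 0 -> n3 C a b = 0 -> q.-1 <= r1 C b c.
Proof. move=> sol hu h1 h2; apply: (sum_ge_pred (i:=a)) => j hj. by rewrite chi_in // (L1 sol hu h1 h2 hj). Qed.
Lemma R2big q (C : {set vert q}) a b c : solid_LD C -> (a,b,c) \notin C ->
  r1 C b c = 0 -> n3 C a b = 0 -> q.-1 <= r2 C a c.
Proof. move=> sol hu h1 h2; apply: (sum_ge_pred (i:=b)) => j hj. by rewrite chi_in // (L2 sol hu h1 h2 hj). Qed.

Lemma P2prop q (C : {set vert q}) a b c : 3 <= q -> solid_LD C -> (a,b,c) \notin C ->
  2 <= r1 C b c + r2 C a c + n3 C a b.
Proof.
move=> hq sol hu.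
case: (posnP (r1 C b c)) => h1; case: (posnP (r2 C a c)) => h2; case: (posnP (n3 C a b)) => h3; try lia.
- by have := N3big sol hu h1 h2; lia.
- by have := N3big sol hu h1 h2; lia.
- by have := R2big sol hu h1 h3; lia.
- by have := R1big sol hu h2 h3; lia.
Qed.

Definition P1 q (C : {set vert q}) a := \sum_(b : 'I_q) n3 C a b.
Definition P2 q (C : {set vert q}) b := \sum_(a : 'I_q) n3 C a b.
Definition P3 q (C : {set vert q}) c := \sum_(b : 'I_q) r1 C b c.

Lemma sum_vert q (F : vert q -> nat) : \sum_u F u = \sum_a \sum_b \sum_c F (a,b,c).
Proof.
rewrite (pair_big predT predT (fun a b => \sum_c F (a,b,c))) /=.
rewrite (pair_big predT predT (fun p c => F (p.1,p.2,c))) /=.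
by apply: eq_bigr => [[[a b] c]] _.
Qed.

Lemma card_chi q (C : {set vert q}) : #|C| = \sum_a \sum_b \sum_c chi C a b c.
Proof.
rewrite -sum1_card big_mkcond /= sum_vert.
by apply: eq_bigr => a _; apply: eq_bigr => b _; apply: eq_bigr => c _; rewrite /chi; case: ifP.
Qed.

Lemma cardP1 q (C : {set vert q}) : #|C| = \sum_a P1 C a.
Proof. by rewrite card_chi. Qed.

Lemma cardP2 q (C : {set vert q}) : #|C| = \sum_b P2 C b.
Proof. by rewrite cardP1 /P1 /P2 exchange_big. Qed.

Lemma cardP3 q (C : {set vert q}) : #|C| = \sum_c P3 C c.
Proof.
rewrite card_chi /P3 /r1.
rewrite (eq_bigr (fun a => \sum_c \sum_b chi C a b c)); last first.
  by move=> a _; rewrite exchange_big.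
rewrite exchange_big /=.
by apply: eq_bigr => c _; rewrite exchange_big.
Qed.

Lemma P3_r2 q (C : {set vert q}) c : P3 C c = \sum_a r2 C a c.
Proof. by rewrite /P3 /r1 /r2 exchange_big. Qed.
Lemma P1_r2 q (C : {set vert q}) a : P1 C a = \sum_c r2 C a c.
Proof. by rewrite /P1 /n3 /r2 exchange_big. Qed.
Lemma P2_r1 q (C : {set vert q}) b : P2 C b = \sum_c r1 C b c.
Proof. by rewrite /P2 /n3 /r1 exchange_big. Qed.

Lemma chi_le1 q (C : {set vert q}) a b c : chi C a b c <= 1.
Proof. by rewrite /chi; case: (_ \in _). Qed.

Lemma n3_le q (C : {set vert q}) a b : n3 C a b <= q.
Proof.
rewrite /n3; apply: leq_trans (_ : \sum_(c : 'I_q) 1 <= q).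
  by apply: leq_sum => c _; exact: chi_le1.
by rewrite sum_nat_const card_ord muln1.
Qed.

Lemma sum_pred1 (I : finType) (i : I) (x : nat) : \sum_k ((k == i) * x) = x.
Proof. by rewrite (bigD1 i) //= eqxx mul1n big1 ?addn0 // => k /negbTE ->. Qed.

Lemma sum_two (I : finType) (F : I -> nat) i j : i != j -> F i + F j <= \sum_k F k.
Proof.
move=> hij; rewrite (bigD1 i) //= (bigD1 j) /=; last by rewrite eq_sym.
by rewrite addnA leq_addr.
Qed.

Lemma sum_two_ge n (F : 'I_n -> nat) m i j : i != j -> (forall k, m <= F k) ->
  F i + F j + (n - 2) * m <= \sum_k F k.
Proof.
move=> hij hm.
have H : \sum_k (m + (k == i) * (F i - m) + (k == j) * (F j - m)) <= \sum_k F k.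
  apply: leq_sum => k _.
  case: (eqVneq k i) => [eki|hki]; case: (eqVneq k j) => [ekj|hkj].
  - by move: hij; rewrite -eki -ekj eqxx.
  - by rewrite eki mul1n mul0n addn0; have := hm i; lia.
  - by rewrite ekj mul1n mul0n addn0; have := hm j; lia.
  - by rewrite !mul0n !addn0.
move: H; rewrite !big_split /= !sum_pred1 sum_nat_const card_ord.
have := hm i; have := hm j.
have : 2 <= n.
  have hv : (i : nat) != j by [].
  by have := ltn_ord i; have := ltn_ord j; lia.
nia.
Qed.

Lemma exists_other n (i : 'I_n) : 2 <= n -> exists j : 'I_n, j != i.
Proof.
move=> hn.
have h0 : 0 < n by lia.
have h1 : 1 < n by lia.
case: (eqVneq i (Ordinal h0)) => [->|h].
  by exists (Ordinal h1); apply/eqP => -[].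
by exists (Ordinal h0); rewrite eq_sym.
Qed.

Lemma argmin n (F : 'I_n -> nat) : 0 < n -> exists i, forall j, F i <= F j.
Proof.
move=> hn; have i0 : 'I_n := Ordinal hn.
case: (@arg_minnP _ i0 predT F isT) => i _ H.
by exists i => j; exact: H.
Qed.

Lemma notin_of_r2 q (C : {set vert q}) a b c : r2 C a c = 0 -> (a,b,c) \notin C.
Proof. by move=> h; apply/negP => hin; move: (sum0_eq b h); rewrite chi_in. Qed.
Lemma notin_of_r1 q (C : {set vert q}) a b c : r1 C b c = 0 -> (a,b,c) \notin C.
Proof. by move=> h; apply/negP => hin; move: (sum0_eq a h); rewrite chi_in. Qed.
Lemma notin_of_n3 q (C : {set vert q}) a b c : n3 C a b = 0 -> (a,b,c) \notin C.
Proof. by move=> h; apply/negP => hin; move: (sum0_eq c h); rewrite chi_in. Qed.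

Lemma sum_ind_card n (F : 'I_n -> nat) : \sum_k (1 - (F k == 0)) + \sum_k ((F k == 0) : nat) = n.
Proof.
rewrite -big_split /= -[RHS](card_ord n) -sum1_card.
by apply: eq_bigr => k _; case: (_ == 0).
Qed.

Lemma count_lb n (F : 'I_n -> nat) : n <= \sum_k F k + \sum_k ((F k == 0) : nat).
Proof.
rewrite -big_split /=.
apply: leq_trans (_ : \sum_(k : 'I_n) 1 <= _); first by rewrite sum_nat_const card_ord muln1.
by apply: leq_sum => k _; case: (posnP (F k)) => [->|h] //=; rewrite addn0.
Qed.

Lemma exists_zero n (F : 'I_n -> nat) : 0 < \sum_k ((F k == 0) : nat) -> exists k, F k = 0.
Proof.
case: (pickP (fun k => F k == 0)) => [k /eqP hk|hn]; first by exists k.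
by rewrite big1 // => k _; rewrite hn.
Qed.

Lemma unique_zero n (F : 'I_n -> nat) k k' : \sum_k ((F k == 0) : nat) = 1 ->
  F k = 0 -> F k' = 0 -> k = k'.
Proof.
move=> h1 hk hk'; apply/eqP; apply/negP => /negP hne.
have := sum_two (fun k => ((F k == 0) : nat)) hne.
by rewrite /= hk hk' h1.
Qed.

Lemma ar1 q : 2 <= q -> (q - 2) * q.-1 + 3 * q.-1 + 1 = q * q.
Proof. by case: q => [|[|q]] // _; rewrite /= !subSS subn0; nia. Qed.

Lemma main3 q (C : {set vert q}) c0 : 3 <= q -> solid_LD C ->
  (forall a, P3 C c0 <= P1 C a) -> (forall b, P3 C c0 <= P2 C b) -> #|C| < q ^ 2 -> False.
Proof.
move=> hq sol hmin1 hmin2 hS.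
have hS1 := cardP1 C; have hS2 := cardP2 C.
set m := P3 C c0 in hmin1 hmin2.
set S := #|C| in hS hS1 hS2.
have hmq : m < q.
  have : \sum_(a : 'I_q) m <= S by rewrite hS1; apply: leq_sum.
  rewrite sum_nat_const card_ord; nia.
set R := \sum_b ((r1 C b c0 == 0) : nat).
set K := \sum_a ((r2 C a c0 == 0) : nat).
have hR : q <= m + R by rewrite /m /P3; exact: count_lb.
have hK : q <= m + K by rewrite /m P3_r2; exact: count_lb.
have col : forall a, r2 C a c0 = 0 -> 2 * q + (q - 3) * R <= P1 C a + m.
  move=> a ha; rewrite /m /P3 /P1 -big_split /=.
  have -> : 2 * q + (q - 3) * R = \sum_(b : 'I_q) (2 + (q - 3) * (r1 C b c0 == 0)).
    by rewrite big_split /= sum_nat_const card_ord -big_distrr /= mulnC.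
  apply: leq_sum => b _.
  have hu : (a,b,c0) \notin C by exact: notin_of_r2.
  case: (posnP (r1 C b c0)) => h1.
    by rewrite ?h1 ?eqxx /= ?muln1 ?addn0; have := N3big sol hu h1 ha; lia.
  rewrite ?(gtn_eqF h1) /= ?muln0 ?addn0.
  by have := P2prop hq sol hu; rewrite ha addn0; lia.
have row : forall b, r1 C b c0 = 0 -> 2 * q + (q - 3) * K <= P2 C b + m.
  move=> b hb; rewrite /m P3_r2 /P2 -big_split /=.
  have -> : 2 * q + (q - 3) * K = \sum_(a : 'I_q) (2 + (q - 3) * (r2 C a c0 == 0)).
    by rewrite big_split /= sum_nat_const card_ord -big_distrr /= mulnC.
  apply: leq_sum => a _.
  have hu : (a,b,c0) \notin C by exact: notin_of_r1.
  case: (posnP (r2 C a c0)) => h2.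
    by rewrite ?h2 ?eqxx /= ?muln1 ?addn0; have := N3big sol hu hb h2; lia.
  rewrite ?(gtn_eqF h2) /= ?muln0 ?addn0.
  by have := P2prop hq sol hu; rewrite hb; lia.
have T1 : q * m + K * (2 * q + (q - 3) * R) <= S + K * (2 * m).
  have H : \sum_(a : 'I_q) (m + (r2 C a c0 == 0) * (2 * q + (q - 3) * R))
         <= \sum_(a : 'I_q) (P1 C a + (r2 C a c0 == 0) * (2 * m)).
    apply: leq_sum => a _.
    case: (eqVneq (r2 C a c0) 0) => h /=.
      by rewrite !mul1n; have := col a h; lia.
    by rewrite !mul0n !addn0.
  move: H; rewrite !big_split /= sum_nat_const card_ord -!big_distrl /= -hS1.
  by rewrite -/K mulnC.
have T2 : q * m + R * (2 * q + (q - 3) * K) <= S + R * (2 * m).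
  have H : \sum_(b : 'I_q) (m + (r1 C b c0 == 0) * (2 * q + (q - 3) * K))
         <= \sum_(b : 'I_q) (P2 C b + (r1 C b c0 == 0) * (2 * m)).
    apply: leq_sum => b _.
    case: (eqVneq (r1 C b c0) 0) => h /=.
      by rewrite !mul1n; have := row b h; lia.
    by rewrite !mul0n !addn0.
  move: H; rewrite !big_split /= sum_nat_const card_ord -!big_distrl /= -hS2.
  by rewrite -/R mulnC.
have hm : m = q.-1.
  case: (leqP q.-1 m) => h; first lia.
  pose d := q - m.
  have hd : 2 <= d by rewrite /d; lia.
  have hRd : d <= R by rewrite /d; lia.
  have hKd : d <= K by rewrite /d; lia.
  have X1 : (q - 1) * d + 2 * m <= 2 * q + (q - 3) * R.
    have := leq_mul (leqnn (q - 3)) hRd.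
    have e1 : (q - 1) * d = (q - 3) * d + 2 * d by rewrite -mulnDl; congr (_ * _); lia.
    rewrite e1 /d; lia.
  have Y1 := leq_mul (leqnn K) X1.
  rewrite mulnDr in Y1.
  have Y2 : d * ((q - 1) * d) <= K * ((q - 1) * d) by apply: leq_mul.
  have Y3 : 2 * ((q - 1) * d) <= d * ((q - 1) * d) by apply: leq_mul.
  have e2 : q * m + q * d = q * q by rewrite -mulnDr /d; congr (_ * _); lia.
  have e3 : q * d <= 2 * ((q - 1) * d) by rewrite mulnA; apply: leq_mul => //; lia.
  move: hS; rewrite expnS expn1 => hS.
  lia.
have hq1 : 1 <= q.-1 by lia.
have hK1 : K = 1.
  have X2 : 2 * m + (q - 1) <= 2 * q + (q - 3) * R.
    have : (q - 3) * 1 <= (q - 3) * R by apply: leq_mul => //; lia.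
    rewrite hm; lia.
  have := leq_mul (leqnn K) X2; rewrite mulnDr => Y.
  case: (leqP K 1) => hK2; first lia.
  have : 2 * (q - 1) <= K * (q - 1) by apply: leq_mul.
  have e : q * m + q = q * q by rewrite -[X in _ + X]muln1 -mulnDr hm; congr (_ * _); lia.
  move: hS; rewrite expnS expn1 => hS'.
  lia.
have hR1 : R = 1.
  have X2 : 2 * m + (q - 1) <= 2 * q + (q - 3) * K.
    have : (q - 3) * 1 <= (q - 3) * K by apply: leq_mul => //; lia.
    rewrite hm; lia.
  have := leq_mul (leqnn R) X2; rewrite mulnDr => Y.
  case: (leqP R 1) => hR2; first lia.
  have : 2 * (q - 1) <= R * (q - 1) by apply: leq_mul.
  have e : q * m + q = q * q by rewrite -[X in _ + X]muln1 -mulnDr hm; congr (_ * _); lia.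
  move: hS; rewrite expnS expn1 => hS'.
  lia.
have [a0 ha0] : exists a0, r2 C a0 c0 = 0 by apply: exists_zero; rewrite -/K hK1.
have [b0 hb0] : exists b0, r1 C b0 c0 = 0 by apply: exists_zero; rewrite -/R hR1.
have hPa0 : 2 * q - 2 <= P1 C a0 by have := col a0 ha0; rewrite hR1 muln1 hm; lia.
have hPb0 : 2 * q - 2 <= P2 C b0 by have := row b0 hb0; rewrite hK1 muln1 hm; lia.
have e4 : (q - 2) * m + 3 * m + 1 = q * q by rewrite hm; exact: ar1 (ltnW hq).
have hS' : S < q * q by move: hS; rewrite expnS expn1.
have smallP1 : forall a, a != a0 -> P1 C a <= q - 1.
  move=> a ha; have := @sum_two_ge _ (P1 C) m a0 a _ hmin1; rewrite eq_sym => /(_ ha).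
  rewrite -hS1; lia.
have smallP2 : forall b, b != b0 -> P2 C b <= q - 1.
  move=> b hb; have := @sum_two_ge _ (P2 C) m b0 b _ hmin2; rewrite eq_sym => /(_ hb).
  rewrite -hS2; lia.
have zero_col : forall a, a != a0 -> n3 C a b0 = 0.
  move=> a ha.
  have hPa := smallP1 a ha.
  have [b' hb'] : exists b', n3 C a b' = 0.
    apply: exists_zero; have := count_lb (n3 C a); rewrite -/(P1 C a); lia.
  have H2 : 2 * q <= P2 C b' + P1 C a.
    rewrite P2_r1 P1_r2 -big_split /=.
    have -> : 2 * q = \sum_(c : 'I_q) 2 by rewrite sum_nat_const card_ord mulnC.
    apply: leq_sum => c _.
    have hu := notin_of_n3 c hb'.
    by have := P2prop hq sol hu; rewrite hb' addn0.
  case: (eqVneq b' b0) => [<-|hne] //.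
  by have := smallP2 b' hne; lia.
have : P2 C b0 <= q.
  rewrite /P2 (bigD1 a0) //= big1 ?addn0; first exact: n3_le.
  by move=> a /zero_col.
lia.
Qed.

Definition rotf q (u : vert q) : vert q := (u.2, u.1.1, u.1.2).
Definition rotg q (u : vert q) : vert q := (u.1.2, u.2, u.1.1).
Definition rotC q (C : {set vert q}) : {set vert q} := (@rotf q) @^-1: C.

Lemma rotK q : cancel (@rotf q) (@rotg q). Proof. by move=> [[a b] c]. Qed.
Lemma rotK' q : cancel (@rotg q) (@rotf q). Proof. by move=> [[a b] c]. Qed.

Lemma adj_rot q (u v : vert q) : adj (rotf u) (rotf v) = adj u v.
Proof.
case: u => [[a b] c]; case: v => [[x y] z]; rewrite /adj /rotf /=.
by rewrite -addnA addnC.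
Qed.

Lemma Nclosed_rot q (z u : vert q) : (rotg z \in Nclosed u) = (z \in Nclosed (rotf u)).
Proof.
rewrite !inE; congr orb; first exact: (can2_eq (@rotK' q) (@rotK q)).
by rewrite -adj_rot rotK'.
Qed.

Lemma Iset_rot q (C : {set vert q}) z u : (rotg z \in Iset (rotC C) u) = (z \in Iset C (rotf u)).
Proof. by rewrite /Iset !in_setI Nclosed_rot /rotC !inE rotK'. Qed.

Lemma solid_rot q (C : {set vert q}) : solid_LD C -> solid_LD (rotC C).
Proof.
case=> hne sol; split.
  case/set0Pn: hne => w hw; apply/set0Pn; exists (rotg w); by rewrite inE rotK'.
move=> u v hu hv huv.
have hu' : rotf u \notin C by move: hu; rewrite inE.
have hv' : rotf v \notin C by move: hv; rewrite inE.
have huv' : rotf u != rotf v by apply: contra huv => /eqP /(can_inj (@rotK q)) ->.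
case/set0Pn: (sol _ _ hu' hv' huv') => z hz.
by apply/set0Pn; exists (rotg z); rewrite in_setD !Iset_rot -in_setD.
Qed.

Lemma card_rot q (C : {set vert q}) : #|rotC C| = #|C|.
Proof. exact: card_preimset (can_inj (@rotK q)). Qed.

Lemma chi_rot q (C : {set vert q}) x y z : chi (rotC C) x y z = chi C z x y.
Proof. by rewrite /chi inE. Qed.

Lemma P3_rot q (C : {set vert q}) t : P3 (rotC C) t = P1 C t.
Proof.
rewrite /P3 /r1 /P1 /n3.
rewrite (eq_bigr (fun b => \sum_a chi C t a b)); last by move=> b _; apply: eq_bigr => a _; rewrite chi_rot.
by rewrite exchange_big.
Qed.

Lemma P1_rot q (C : {set vert q}) t : P1 (rotC C) t = P2 C t.
Proof.
rewrite /P1 /n3 /P2.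
rewrite (eq_bigr (fun b => \sum_c chi C c t b)); last by move=> b _; apply: eq_bigr => a _; rewrite chi_rot.
by rewrite exchange_big.
Qed.

Lemma P2_rot q (C : {set vert q}) t : P2 (rotC C) t = P3 C t.
Proof.
rewrite /P2 /n3 /P3 /r1.
by apply: eq_bigr => a _; apply: eq_bigr => c _; rewrite chi_rot.
Qed.

Lemma lower3 q (C : {set vert q}) : 3 <= q -> solid_LD C -> q ^ 2 <= #|C|.
Proof.
move=> hq sol; rewrite leqNgt; apply/negP => hS.
have q0 : 0 < q by lia.
have [a1 h1] := argmin (P1 C) q0.
have [b1 h2] := argmin (P2 C) q0.
have [c1 h3] := argmin (P3 C) q0.
case: (leqP (P3 C c1) (P1 C a1)) => e1; case: (leqP (P3 C c1) (P2 C b1)) => e2.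
- apply: (main3 (c0 := c1) hq sol) => // [a|b].
    exact: leq_trans e1 (h1 a).
  exact: leq_trans e2 (h2 b).
- apply: (main3 (C := rotC (rotC C)) (c0 := b1) hq).
  + by do 2 apply: solid_rot.
  + by move=> a; rewrite P3_rot P1_rot P1_rot P2_rot; apply: leq_trans (h3 a); lia.
  + by move=> b; rewrite P3_rot P1_rot P2_rot P3_rot; apply: leq_trans (h1 b); lia.
  + by rewrite !card_rot.
- case: (leqP (P1 C a1) (P2 C b1)) => e3.
  + apply: (main3 (C := rotC C) (c0 := a1) hq (solid_rot sol)).
    * by move=> a; rewrite P3_rot P1_rot; apply: leq_trans e3 (h2 a).
    * by move=> b; rewrite P3_rot P2_rot; apply: leq_trans (h3 b); lia.
    * by rewrite card_rot.
  + apply: (main3 (C := rotC (rotC C)) (c0 := b1) hq).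
    * by do 2 apply: solid_rot.
    * by move=> a; rewrite P3_rot P1_rot P1_rot P2_rot; apply: leq_trans (h3 a); lia.
    * by move=> b; rewrite P3_rot P1_rot P2_rot P3_rot; apply: leq_trans (h1 b); lia.
    * by rewrite !card_rot.
- case: (leqP (P1 C a1) (P2 C b1)) => e3.
  + apply: (main3 (C := rotC C) (c0 := a1) hq (solid_rot sol)).
    * by move=> a; rewrite P3_rot P1_rot; apply: leq_trans e3 (h2 a).
    * by move=> b; rewrite P3_rot P2_rot; apply: leq_trans (h3 b); lia.
    * by rewrite card_rot.
  + apply: (main3 (C := rotC (rotC C)) (c0 := b1) hq).
    * by do 2 apply: solid_rot.
    * by move=> a; rewrite P3_rot P1_rot P1_rot P2_rot; apply: leq_trans (h3 a); lia.
    * by move=> b; rewrite P3_rot P1_rot P2_rot P3_rot; apply: leq_trans (h1 b); lia.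
    * by rewrite !card_rot.
Qed.

Lemma two_elems q (x y c : 'I_q) : q = 2 -> x != c -> y != c -> x = y.
Proof.
move=> hq hx hy; apply/val_inj => /=.
have hx' : (x : nat) != c by []. have hy' : (y : nat) != c by [].
have := ltn_ord x; have := ltn_ord y; have := ltn_ord c; lia.
Qed.

Lemma S1 q (C : {set vert q}) a b c a' c' : q = 2 -> solid_LD C -> (a,b,c) \notin C ->
  r1 C b c = 0 -> r2 C a c = 0 -> c' != c -> a' != a -> (a',b,c') \in C.
Proof.
move=> hq sol hu h1 h2 hc ha; apply/negPn/negP => hv.
have huv : (a,b,c) != (a',b,c') by apply/eqP => -[e _]; rewrite e eqxx in ha.
case: (IsetP hu hv huv sol) => [[[za zb] zc]] [hz hadj hn].
case: (adj_cases hadj) => [[_ e1 e2]|[e1 _ e2]|[e1 e2 hzc]].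
- by subst zb zc; move: (sum0_eq za h1); rewrite chi_in.
- by subst za zc; move: (sum0_eq zb h2); rewrite chi_in.
- subst za zb; have ez : zc = c' by apply: two_elems hq hzc hc.
  subst zc; case/negP: hn; by rewrite adj1 1?eq_sym // orbT.
Qed.

Lemma S1' q (C : {set vert q}) a b c b' c' : q = 2 -> solid_LD C -> (a,b,c) \notin C ->
  r1 C b c = 0 -> r2 C a c = 0 -> c' != c -> b' != b -> (a,b',c') \in C.
Proof.
move=> hq sol hu h1 h2 hc hb; apply/negPn/negP => hv.
have huv : (a,b,c) != (a,b',c') by apply/eqP => -[e _]; rewrite e eqxx in hb.
case: (IsetP hu hv huv sol) => [[[za zb] zc]] [hz hadj hn].
case: (adj_cases hadj) => [[_ e1 e2]|[e1 _ e2]|[e1 e2 hzc]].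
- by subst zb zc; move: (sum0_eq za h1); rewrite chi_in.
- by subst za zc; move: (sum0_eq zb h2); rewrite chi_in.
- subst za zb; have ez : zc = c' by apply: two_elems hq hzc hc.
  subst zc; case/negP: hn; by rewrite adj2 1?eq_sym // orbT.
Qed.

Lemma leq_one (I : finType) (F : I -> nat) i : F i <= \sum_k F k.
Proof. by rewrite (bigD1 i) //= leq_addr. Qed.

Lemma exists_pos (I : finType) (F : I -> nat) : 0 < \sum_k F k -> exists k, 0 < F k.
Proof.
case: (pickP (fun k => 0 < F k)) => [k hk|hn]; first by exists k.
by rewrite big1 // => k _; move: (hn k); case: (F k).
Qed.

Lemma lower2 q (C : {set vert q}) : q = 2 -> solid_LD C -> 4 <= #|C|.
Proof.
move=> hq sol; rewrite leqNgt; apply/negP => hS.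
have q0 : 0 < q by lia.
have hq2 : 2 <= q by lia.
have [c0 hc0] := argmin (P3 C) q0.
have [c1 hc1] := exists_other c0 hq2.
have hS3 := cardP3 C.
have T := sum_two (P3 C) hc1.
have hc0c1 := hc0 c1.
case: (posnP (P3 C c0)) => hP0.
- have H : forall a b, (a,b,c1) \in C.
    move=> a b.
    have h1 : r1 C b c0 = 0 by apply: (@sum0_eq _ (fun b => r1 C b c0)); exact: hP0.
    have h2 : r2 C a c0 = 0 by apply: (@sum0_eq _ (fun a => r2 C a c0)); rewrite -P3_r2.
    exact: L3 sol (notin_of_r1 a h1) h1 h2 hc1.
  have : \sum_(b : 'I_q) \sum_(a : 'I_q) 1 <= P3 C c1.
    by apply: leq_sum => b _; apply: leq_sum => a _; rewrite chi_in.
  rewrite !sum_nat_const !card_ord muln1 => h.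
  have e4 : q * q = 4 by rewrite hq.
  lia.
- have P01 : P3 C c0 = 1 by lia.
  have [b0 hb0] : exists b0, 0 < r1 C b0 c0 by apply: exists_pos; rewrite -/(P3 C c0) P01.
  have [a0 ha0] : exists a0, 0 < chi C a0 b0 c0 by apply: exists_pos.
  have hw : (a0,b0,c0) \in C by move: ha0; rewrite /chi; case: (_ \in _).
  have [a1 ha1] := exists_other a0 hq2.
  have [b1 hb1] := exists_other b0 hq2.
  have h1 : r1 C b1 c0 = 0.
    have := sum_two (fun b => r1 C b c0) hb1; rewrite -/(P3 C c0) P01; lia.
  have h2 : r2 C a1 c0 = 0.
    have := sum_two (fun a => r2 C a c0) ha1; rewrite -P3_r2 P01.
    have : chi C a0 b0 c0 <= r2 C a0 c0 by exact: leq_one.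
    lia.
  have hu : (a1,b1,c0) \notin C by exact: notin_of_r1.
  have x1 : (a1,b1,c1) \in C by exact: L3 sol hu h1 h2 hc1.
  have x2 : (a0,b1,c1) \in C by apply: S1 hq sol hu h1 h2 hc1 _; rewrite eq_sym.
  have x3 : (a1,b0,c1) \in C by apply: S1' hq sol hu h1 h2 hc1 _; rewrite eq_sym.
  have e1 := sum_two (fun b => r1 C b c1) hb1.
  have e2 := sum_two (fun a => chi C a b1 c1) ha1.
  have e3 : chi C a1 b0 c1 <= r1 C b0 c1 by exact: leq_one.
  move: e1 e2 e3; rewrite /= -/(P3 C c1) -/(r1 C b1 c1) !chi_in //.
  lia.
Qed.

Definition cfix q (hq : 0 < q) (t : nat) : 'I_q := Ordinal (ltn_pmod (q - t %% q) hq).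

Lemma cfixP q (hq : 0 < q) t : (t + cfix hq t) %% q = 0.
Proof.
rewrite /= modnDmr -modnDml subnKC ?modnn //.
exact: ltnW (ltn_pmod t hq).
Qed.

Lemma cfix_uniq q (hq : 0 < q) t (c : 'I_q) : (t + c) %% q = 0 -> c = cfix hq t.
Proof.
move=> h; apply: val_inj => /=.
have : (c + t == cfix hq t + t %[mod q]).
  by rewrite [c + t]addnC h addnC cfixP.
rewrite eqn_modDr => /eqP; rewrite (modn_small (ltn_ord c)) => ->.
by rewrite /= modn_small // ltn_pmod.
Qed.

Definition C0 q : {set vert q} := [set u : vert q | (u.1.1 + u.1.2 + u.2) %% q == 0].

Lemma card_C0 q (hq : 0 < q) : #|C0 q| = q ^ 2.
Proof.
pose g := fun p : 'I_q * 'I_q => ((p.1, p.2, cfix hq (p.1 + p.2)) : vert q).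
have ginj : injective g by move=> [a b] [a' b'] [-> ->].
have -> : C0 q = g @: setT.
  apply/setP => [[[a b] c]]; rewrite inE /=; apply/eqP/imsetP.
    move=> h; exists (a,b) => //; rewrite /g /=.
    by rewrite -(cfix_uniq hq h).
  by case=> [[x y]] _ [-> -> ->]; rewrite /= cfixP.
by rewrite card_imset // cardsT card_prod card_ord expnS expn1.
Qed.

Lemma cfix_neq q (hq : 0 < q) t (a : 'I_q) : (t + a) %% q != 0 -> cfix hq t != a.
Proof. by apply: contra => /eqP <-; rewrite cfixP. Qed.

Lemma solid_C0 q (hq : 0 < q) : solid_LD (C0 q).
Proof.
split.
  apply/set0Pn; exists (Ordinal hq, Ordinal hq, Ordinal hq); by rewrite inE /= mod0n.
move=> [[a b] c] v hu hv huv.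
have hu' : (a + b + c) %% q != 0 by move: hu; rewrite inE.
set f1 := cfix hq (b + c); set f2 := cfix hq (a + c); set f3 := cfix hq (a + b).
have hf1 : f1 != a by apply: cfix_neq; rewrite addnC addnA.
have hf2 : f2 != b by apply: cfix_neq; rewrite addnAC.
have hf3 : f3 != c by apply: cfix_neq.
have m1 : (f1, b, c) \in C0 q by rewrite inE /= -addnA addnC cfixP.
have m2 : (a, f2, c) \in C0 q by rewrite inE /= addnAC cfixP.
have m3 : (a, b, f3) \in C0 q by rewrite inE /= cfixP.
have Iu1 : (f1, b, c) \in Iset (C0 q) (a, b, c) by rewrite /Iset in_setI m1 inE adj1 ?orbT.
have Iu2 : (a, f2, c) \in Iset (C0 q) (a, b, c) by rewrite /Iset in_setI m2 inE adj2 ?orbT.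
have Iu3 : (a, b, f3) \in Iset (C0 q) (a, b, c) by rewrite /Iset in_setI m3 inE adj3 ?orbT.
have nv : forall x, x \in C0 q -> x \in Iset (C0 q) v -> adj x v.
  move=> x hx; rewrite /Iset in_setI inE hx andbT => /orP [/eqP ex|//].
  by rewrite -ex hx in hv.
suff : ~~ ((f1, b, c) \in Iset (C0 q) v) \/ ~~ ((a, f2, c) \in Iset (C0 q) v) \/ ~~ ((a, b, f3) \in Iset (C0 q) v).
  case=> [h|[h|h]]; apply/set0Pn; [exists (f1,b,c) | exists (a,f2,c) | exists (a,b,f3)];
    by rewrite in_setD h.
case: (boolP ((f1, b, c) \in Iset (C0 q) v)) => h1; last by left.
case: (boolP ((a, f2, c) \in Iset (C0 q) v)) => h2; last by right; left.
case: (boolP ((a, b, f3) \in Iset (C0 q) v)) => h3; last by right; right.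
exfalso; move: (nv _ m1 h1) (nv _ m2 h2) (nv _ m3 h3) huv.
case: v {hv h1 h2 h3 nv} => [[va vb] vc]; rewrite /adj.
case: (eqVneq va a) => [->|ea].
  rewrite hf1 /= => /eqP e _ _.
  case: (eqVneq b vb) e => [<-|//]; case: (eqVneq c vc) => [<-|//] _.
  by rewrite eqxx.
move=> _ e2 e3 _.
have hb : b != vb.
  apply: contraTneq e2 => <-; rewrite (negbTE hf2) /=.
  by case: (c != vc).
by move: e3; rewrite hb; case: (f3 != vc).
Qed.

Theorem theorem23 (q : nat) (hq : 2 <= q) : gamma_DLD_is q (q ^ 2).
Proof.
have q0 : 0 < q by lia.
split.
  by exists (C0 q); split; [exact: solid_C0 | exact: card_C0].
move=> C sol.
case: (ltngtP q 2) => hq2.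
- lia.
- exact: lower3.
- by subst q; exact: lower2.
Qed.
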